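(* Let $f \in \Bbbk[t]\setminus\Bbbk$ and let $L$ be a Lie subalgebra of $L(f)$ of finite codimension in $L(f)$. Then there exists $g \in \Bbbk[t]\setminus\{0\}$ with $f'g\in\Bbbk[f]$ such that $L(f,g) \subseteq L$.
   Context: $\Bbbk$ is a field of characteristic zero. $\mathbb{W}_1 = \Bbbk[t]\partial$, $\partial = d/dt$, with bracket $[f\partial, g\partial] = (fg'-f'g)\partial$. For $f,g \in \Bbbk[t]\setminus\{0\}$ with $f'g \in \Bbbk[f]$, $L(f,g) = \Bbbk[f]\,g\partial \subseteq \mathbb{W}_1$. $g_f$ is the unique monic polynomial of minimal degree with $f'g_f \in \Bbbk[f]$, and $L(f) = L(f,g_f)$. *)

(* Defs.v *)
From mathcomp Require Import all_boot all_order all_algebra.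
Set Implicit Arguments. Unset Strict Implicit. Unset Printing Implicit Defensive.
Import GRing.Theory.
Local Open Scope ring_scope.

(* Elements of W_1 = k[t] d/dt are represented by their coefficient polynomial
   f in {poly K} (standing for f * d/dt). *)

(* Lie bracket [f d, g d] = (f g' - f' g) d *)
Definition wbracket (K : fieldType) (p q : {poly K}) : {poly K} :=
  p * q^`() - p^`() * q.

Definition in_kf (K : fieldType) (f h : {poly K}) : Prop :=
  exists P : {poly K}, h = P \Po f.

Definition Lfg (K : fieldType) (f g : {poly K}) (h : {poly K}) : Prop :=
  exists P : {poly K}, h = (P \Po f) * g.

Definition is_gf (K : fieldType) (f g : {poly K}) : Prop :=
  [/\ g \is monic, in_kf f (f^`() * g) &
      forall h : {poly K}, h != 0 -> in_kf f (f^`() * h) -> (size g <= size h)%N].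

Definition is_lie_subalgebra (K : fieldType) (L : {poly K} -> Prop) : Prop :=
  [/\ L 0,
      forall p q, L p -> L q -> L (p + q),
      forall (a : K) p, L p -> L (a *: p) &
      forall p q, L p -> L q -> L (wbracket p q)].

Definition finite_codim (K : fieldType) (L M : {poly K} -> Prop) : Prop :=
  exists (n : nat) (v : 'I_n -> {poly K}), (forall i, M (v i)) /\
    forall h, M h -> exists (l : {poly K}) (c : 'I_n -> K),
      L l /\ h = l + \sum_(i < n) c i *: v i.

(* Main.v *)
From Stdlib Require Import IndefiniteDescription.
Require Import Defs.
From mathcomp Require Import all_boot all_order all_algebra.
From mathcomp Require Import ring.
Import GRing.Theory.
Local Open Scope ring_scope.

Lemma choiceI (A T : Type) (P : A -> T -> Prop) :
  (forall a, exists t, P a t) -> exists F : A -> T, forall a, P a (F a).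
Proof.
move=> H; exists (fun a => proj1_sig (constructive_indefinite_description _ (H a))).
by move=> a; case: (constructive_indefinite_description _ (H a)).
Qed.

Lemma deriv_sumZ (K : fieldType) (I : finType) (F : I -> {poly K}) (c : I -> K) :
  (\sum_i c i *: F i)^`() = \sum_i c i *: (F i)^`().
Proof.
by elim/big_rec2: _ => [|i a b _ <-]; rewrite ?deriv0 // derivD derivZ.
Qed.

Lemma wbr_suml (K : fieldType) (I : finType) (F : I -> {poly K}) (c : I -> K) q :
  wbracket (\sum_i c i *: F i) q = \sum_i c i *: wbracket (F i) q.
Proof.
rewrite /wbracket deriv_sumZ mulr_suml mulr_suml -sumrB; apply: eq_bigr => i _.
by rewrite -!scalerAl scalerBr.
Qed.

Lemma wbr_sumr (K : fieldType) (I : finType) (F : I -> {poly K}) (c : I -> K) p :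
  wbracket p (\sum_i c i *: F i) = \sum_i c i *: wbracket p (F i).
Proof.
rewrite /wbracket deriv_sumZ mulr_sumr mulr_sumr -sumrB; apply: eq_bigr => i _.
by rewrite -!scalerAr scalerBr.
Qed.

Lemma wbrD (K : fieldType) (p q r : {poly K}) :
  wbracket p (q + r) = wbracket p q + wbracket p r.
Proof. rewrite /wbracket derivD; ring. Qed.

Lemma Lsum (K : fieldType) (L : {poly K} -> Prop) (I : finType) (F : I -> {poly K}) (c : I -> K) :
  is_lie_subalgebra L -> (forall i, L (F i)) -> L (\sum_i c i *: F i).
Proof.
case=> L0 LD LZ _ HF.
by apply: (big_ind L) => // i _; apply: LZ.
Qed.

Lemma comp_sum (K : fieldType) (I : finType) (F : I -> {poly K}) (c : I -> K) f :
  (\sum_i c i *: F i) \Po f = \sum_i c i *: (F i \Po f).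
Proof. by elim/big_rec2: _ => [|i a b _ <-]; rewrite ?comp_poly0 // comp_polyD comp_polyZ. Qed.

Lemma deriv_neq0 (K : fieldType) (hchar : [pchar K] =i pred0) (f : {poly K}) :
  (1 < size f)%N -> f^`() != 0.
Proof.
move=> hf; apply/eqP => h.
have := congr1 (fun p : {poly K} => p`_(size f).-2) h.
rewrite coef_deriv coef0 /=.
have e : (size f).-2.+1 = (size f).-1 by case: (size f) hf => [|[|m]].
rewrite e -lead_coefE -mulr_natr => /eqP; rewrite mulf_eq0 lead_coef_eq0 => /orP[] /eqP hh.
  by move: hf; rewrite hh size_poly0.
have /pcharf0P hc := hchar.
by move: hh => /eqP; rewrite hc; case: (size f) hf => [|[|m]].
Qed.

Lemma antider (K : fieldType) (hchar : [pchar K] =i pred0) (P : {poly K}) :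
  exists R : {poly K}, R^`() = P.
Proof.
exists (\poly_(i < (size P).+1) (if i is j.+1 then P`_j * ((j.+1)%:R)^-1 else 0)).
apply/polyP => i; rewrite coef_deriv coef_poly ltnS.
case: ltnP => hi.
  rewrite /= -[X in X = _]mulr_natr mulfVK //.
  by have /pcharf0P -> := hchar.
by rewrite mul0rn nth_default.
Qed.

Lemma Lfg_br (K : fieldType) (f gf P0 p q : {poly K}) :
  f^`() * gf = P0 \Po f -> Lfg f gf p -> Lfg f gf q -> Lfg f gf (wbracket p q).
Proof.
move=> hP [A ->] [B ->]; exists ((A * B^`() - A^`() * B) * P0).
rewrite /wbracket !derivM !deriv_comp !comp_polyM comp_polyB !comp_polyM -hP.
ring.
Qed.

Theorem mainTheorem3 (K : fieldType) (hchar : [pchar K] =i pred0)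
  (f : {poly K}) (hf : (1 < size f)%N)
  (gf : {poly K}) (hgf : is_gf f gf)
  (L : {poly K} -> Prop)
  (hL : is_lie_subalgebra L) (hLsub : forall h, L h -> Lfg f gf h)
  (hcod : finite_codim L (Lfg f gf)) :
  exists g : {poly K}, [/\ g != 0, in_kf f (f^`() * g) &
    forall h, Lfg f g h -> L h].
Proof.
have hfd := deriv_neq0 _ hchar _ hf.
case: hgf => gfmon [P0 hP0] _.
have gf0 : gf != 0 := monic_neq0 gfmon.
have hL' := hL; case: hL' => L0 LD LZ LB.
case: hcod => n [v [hv hdec]].
pose N := (n.+1 * n).+1.
pose w (k : 'I_N) := ('X^k \Po f) * gf.
have : forall k : 'I_N, exists ld : {poly K} * ('I_n -> K),
    L ld.1 /\ w k = ld.1 + \sum_(i < n) ld.2 i *: v i.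
  move=> k; have [l [c [hl e]]] := hdec (w k) (ex_intro _ 'X^k erefl).
  by exists (l, c).
case/choiceI => ld hld.
pose l k := (ld k).1. pose d k := (ld k).2.
have hlf : forall k, Lfg f gf (l k) by move=> k; apply: hLsub; case: (hld k).
have : forall ki : 'I_N * 'I_n, exists lc : {poly K} * ('I_n -> K),
    L lc.1 /\ wbracket (l ki.1) (v ki.2) = lc.1 + \sum_(j < n) lc.2 j *: v j.
  move=> [k i]; have [l' [c [hl e]]] := hdec (wbracket (l k) (v i)) (Lfg_br _ _ _ _ _ _ hP0 (hlf k) (hv i)).
  by exists (l', c).
case/choiceI => lc hlc.
pose E (k : 'I_N) (i : 'I_n.+1) (j : 'I_n) : K :=
  if unlift ord0 i is Some i' then (lc (k, i')).2 j else d k j.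
pose M : 'M[K]_(N, n.+1 * n) := \matrix_(k < N) mxvec (\matrix_(i, j) E k i j).
have hK : kermx M != 0.
  rewrite -mxrank_eq0 mxrank_ker subn_eq0 -ltnNge.
  exact: (leq_ltn_trans (rank_leq_col M) (ltnSn _)).
have [k0 hk0] : exists k0, row k0 (kermx M) != 0.
  case: (pickP (fun k => row k (kermx M) != 0)) => [k0 h|hn]; first by exists k0.
  move: hK; have -> : kermx M = 0; last by rewrite eqxx.
  by apply/row_matrixP => k; rewrite row0; apply/eqP; move: (hn k) => /negbFE.
pose u := row k0 (kermx M).
have hu : u *m M = 0 by rewrite /u -row_mul mulmx_ker row0.
pose lam (k : 'I_N) := u 0 k.
have hsum : forall i j, \sum_(k < N) lam k * E k i j = 0.
  move=> i j; have := congr1 (fun A : 'M[K]_(1, n.+1 * n) => A 0 (mxvec_index i j)) hu.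
  rewrite mxE /= mxE => h0; apply: (eq_trans _ h0); apply: eq_bigr => k _; by rewrite /M mxE mxvecE mxE.
have hd : forall j, \sum_k lam k * d k j = 0.
  by move=> j; apply: (eq_trans _ (hsum ord0 j)); apply: eq_bigr => k _; rewrite /E unlift_none.
have hc : forall i j, \sum_k lam k * (lc (k,i)).2 j = 0.
  by move=> i j; apply: (eq_trans _ (hsum (lift ord0 i) j)); apply: eq_bigr => k _; rewrite /E liftK.
pose Lam : {poly K} := \sum_(k < N) lam k *: 'X^k.
pose a := \sum_k lam k *: l k.
have La : L a by apply: Lsum => // k; case: (hld k).
have ea : a = (Lam \Po f) * gf.
  have el : forall k, l k = w k - \sum_i d k i *: v i.
    by move=> k; case: (hld k) => _ ->; rewrite addrK.
  rewrite /a; under eq_bigr do rewrite el scalerBr.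
  rewrite sumrB.
  have -> : \sum_k lam k *: \sum_i d k i *: v i = 0.
    rewrite (eq_bigr (fun k => \sum_i (lam k * d k i) *: v i)); last first.
      by move=> k _; rewrite scaler_sumr; apply: eq_bigr => i _; rewrite scalerA.
    by rewrite exchange_big /= big1 // => i _; rewrite -scaler_suml hd scale0r.
  rewrite subr0 /Lam comp_sum mulr_suml; apply: eq_bigr => k _.
  by rewrite /w scalerAl.
have Lam0 : Lam != 0.
  have [k1 hk1] : exists k1, lam k1 != 0.
    case: (pickP (fun k => lam k != 0)) => [k1 h|hn]; first by exists k1.
    move: hk0; have -> : row k0 (kermx M) = 0; last by rewrite eqxx.
    apply/rowP => k; have := hn k; rewrite /lam /u => /negbFE/eqP ->; by rewrite mxE.
  apply/eqP => h; have := congr1 (fun p : {poly K} => p`_k1) h.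
  rewrite coef0 /Lam coef_sum (bigD1 k1) //= big1 ?addr0.
    by rewrite coefZ coefXn eqxx mulr1 => hh; rewrite hh eqxx in hk1.
  move=> k hk; rewrite coefZ coefXn; case: eqP => [e|]; last by rewrite mulr0.
  by move/val_inj: e => e; rewrite e eqxx in hk.
have a0 : a != 0 by rewrite ea mulf_neq0 // comp_poly_eq0.
have Lbr : forall h, Lfg f gf h -> L (wbracket a h).
  move=> h /hdec [l' [c [hl' ->]]].
  rewrite wbrD; apply: (LD); first exact: LB.
  rewrite wbr_sumr; apply: Lsum => // i.
  have e2 : forall k, wbracket (l k) (v i) = (lc (k,i)).1 + \sum_j (lc (k,i)).2 j *: v j.
    by move=> k; case: (hlc (k,i)).
  rewrite /a wbr_suml.
  under eq_bigr do rewrite e2 scalerDr.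
  rewrite big_split /=. apply: (LD).
    by apply: (@Lsum _ _ _ (fun k => (lc (k,i)).1)) => // k; case: (hlc (k,i)).
  have -> : \sum_k lam k *: \sum_j (lc (k,i)).2 j *: v j = 0; last exact: L0.
  rewrite (eq_bigr (fun k => \sum_j (lam k * (lc (k,i)).2 j) *: v j)); last first.
    by move=> k _; rewrite scaler_sumr; apply: eq_bigr => j _; rewrite scalerA.
  by rewrite exchange_big /= big1 // => j _; rewrite -scaler_suml hc scale0r.
exists (a * a * f^`()); split.
- by rewrite !mulf_neq0.
- exists ((Lam * P0) ^+ 2); rewrite expr2 !comp_polyM -hP0 ea; ring.
- move=> h [P ->]; have [R hR] := antider _ hchar P.
  have hm : Lfg f gf (a * (R \Po f)) by exists (Lam * R); rewrite ea comp_polyM; ring.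
  suff -> : (P \Po f) * (a * a * f^`()) = wbracket a (a * (R \Po f)) by exact: Lbr.
  by rewrite /wbracket derivM deriv_comp hR; ring.
Qed.
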